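(* For every integer $p\ge 1$, the edge set of $K_{4p,4p,4p}\times K_2$ can be partitioned into $2p+1$ planar subgraphs; in particular $\theta(K_{4p,4p,4p}\times K_2)\le 2p+1$.
   Context: The thickness $\theta(G)$ of a graph $G$ is the minimum number of planar subgraphs whose union is $G$. The Kronecker product $G\times H$ of graphs $G$ and $H$ is the graph with vertex set $V(G)\times V(H)$ in which $(g,h)$ and $(g',h')$ are adjacent if and only if $gg'\in E(G)$ and $hh'\in E(H)$. $K_{n,n,n}$ denotes the complete tripartite graph with three parts of size $n$. *)

(* Defs.v *)
From Stdlib Require Import Reals.
Open Scope R_scope.

Definition idx (n : nat) : Type := { i : nat | (i < n)%nat }.

(* A (simple, undirected) graph is given by a vertex type and an adjacency relation. *)

Definition Knnn_V (n : nat) : Type := (idx 3 * idx n)%type.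
Definition Knnn_adj (n : nat) (x y : Knnn_V n) : Prop :=
  proj1_sig (fst x) <> proj1_sig (fst y).

Definition K2_adj (b c : bool) : Prop := b <> c.

Definition kron {VG VH : Type} (adjG : VG -> VG -> Prop) (adjH : VH -> VH -> Prop)
  (x y : VG * VH) : Prop :=
  adjG (fst x) (fst y) /\ adjH (snd x) (snd y).

Definition planar {V : Type} (adj : V -> V -> Prop) : Prop :=
  exists (pos : V -> R * R) (arc : V -> V -> R -> R * R),
    (forall u v, pos u = pos v -> u = v) /\
    (forall u v, adj u v ->
       continuity (fun t => fst (arc u v t)) /\
       continuity (fun t => snd (arc u v t)) /\
       arc u v 0 = pos u /\ arc u v 1 = pos v /\
       (forall s t, 0 <= s <= 1 -> 0 <= t <= 1 -> arc u v s = arc u v t -> s = t) /\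
       (forall t w, 0 < t < 1 -> arc u v t <> pos w) /\
       (forall t, arc v u t = arc u v (1 - t))) /\
    (forall u v x y, adj u v -> adj x y ->
       ~ ((u = x /\ v = y) \/ (u = y /\ v = x)) ->
       forall s t, 0 < s < 1 -> 0 < t < 1 -> arc u v s <> arc x y t).

Definition planar_edge_partition {V : Type} (adj : V -> V -> Prop) (k : nat) : Prop :=
  exists c : V -> V -> nat,
    (forall u v, adj u v -> c u v = c v u /\ (c u v < k)%nat) /\
    (forall i, (i < k)%nat -> planar (fun u v => adj u v /\ c u v = i)).

Definition thickness_le {V : Type} (adj : V -> V -> Prop) (k : nat) : Prop :=
  exists sub : nat -> V -> V -> Prop,
    (forall i, (i < k)%nat -> forall u v, sub i u v -> adj u v) /\
    (forall i, (i < k)%nat -> planar (sub i)) /\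
    (forall u v, adj u v -> exists i, (i < k)%nat /\ sub i u v).

(* Main.v *)
Require Import Defs.
From Stdlib Require Import Reals.
From Stdlib Require Import Arith Lia Lra.

Module BookM.
Local Open Scope R_scope.


Definition sgnb (b : bool) : R := if b then 1 else -1.

Lemma key_nest (a b c d X : R) : a < b -> c < d -> a < X < b -> c < X < d ->
  (X - a) * (b - X) = (X - c) * (d - X) ->
  ~ (a < c < b /\ b < d) -> ~ (c < a < d /\ d < b) -> a = c /\ b = d.
Proof.
  intros Hab Hcd HX1 HX2 Heq N1 N2.
  destruct (Rtotal_order a c) as [Hac|[Hac|Hac]].
  -
    destruct (Rle_lt_dec b c) as [Hbc|Hbc]. { lra. }
    destruct (Rlt_le_dec b d) as [Hbd|Hdb]. { exfalso; apply N1; lra. }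
    exfalso. assert (0 < X - c) by lra. assert (0 < d - X) by lra.
    assert ((X - c) * (d - X) < (X - a) * (b - X)).
    { apply Rle_lt_trans with ((X - c) * (b - X)).
      - apply Rmult_le_compat_l; lra.
      - apply Rmult_lt_compat_r; lra. }
    lra.
  - subst c. split; [reflexivity|].
    destruct (Rtotal_order b d) as [H|[H|H]]; [|exact H|].
    + exfalso. assert ((X - a) * (b - X) < (X - a) * (d - X)) by (apply Rmult_lt_compat_l; lra). lra.
    + exfalso. assert ((X - a) * (d - X) < (X - a) * (b - X)) by (apply Rmult_lt_compat_l; lra). lra.
  - destruct (Rle_lt_dec d a) as [Hda|Hda]. { lra. }
    destruct (Rlt_le_dec d b) as [Hdb|Hbd]. { exfalso; apply N2; lra. }
    exfalso. assert (0 < X - a) by lra. assert (0 < b - X) by lra.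
    assert ((X - a) * (b - X) < (X - c) * (d - X)).
    { apply Rle_lt_trans with ((X - a) * (d - X)).
      - apply Rmult_le_compat_l; lra.
      - apply Rmult_lt_compat_r; lra. }
    lra.
Qed.

Definition interleave (a b c d : R) : Prop :=
  (Rmin a b < Rmin c d < Rmax a b /\ Rmax a b < Rmax c d) \/
  (Rmin c d < Rmin a b < Rmax c d /\ Rmax c d < Rmax a b).

Lemma book_planar {V : Type} (adj : V -> V -> Prop) (x : V -> R) (pg : V -> V -> bool) :
  (forall u v, x u = x v -> u = v) ->
  (forall u v, adj u v -> u <> v) ->
  (forall u v, adj u v -> pg u v = pg v u) ->
  (forall u v w z, adj u v -> adj w z -> pg u v = pg w z ->
      ~ interleave (x u) (x v) (x w) (x z)) ->
  planar adj.
Proof.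
  intros Hinj Hirr Hsym Hnc.
  exists (fun u => (x u, 0)).
  exists (fun u v t => (x u + t * (x v - x u), sgnb (pg u v) * (t * (1 - t) * ((x v - x u) * (x v - x u))))).
  split; [|split].
  - intros u v H. injection H; intros; auto.
  - intros u v Huv.
    assert (Hne : x u <> x v) by (intro E; apply (Hirr u v Huv); auto).
    split; [simpl; reg|]. split; [simpl; reg|].
    split; [f_equal; ring|]. split; [f_equal; ring|].
    split.
    { intros s t _ _ E. injection E; intros _ E1.
      apply (Rmult_eq_reg_r (x v - x u)); [lra|]. intro. apply Hne; lra. }
    split.
    { intros t w Ht E. injection E; intros E2 _.
      assert (0 < t * (1 - t) * ((x v - x u) * (x v - x u))).
      { apply Rmult_lt_0_compat. apply Rmult_lt_0_compat; lra.
        assert (x v - x u <> 0) by lra. 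
        destruct (Rlt_or_le 0 (x v - x u)); [nra|]. nra. }
      unfold sgnb in E2; destruct (pg u v); lra. }
    intros t. rewrite (Hsym u v Huv). f_equal; ring.
  - intros u v w z Huv Hwz Hnot s t Hs Ht E.
    injection E; intros E2 E1.
    assert (Hne1 : x u <> x v) by (intro Q; apply (Hirr u v Huv); auto).
    assert (Hne2 : x w <> x z) by (intro Q; apply (Hirr w z Hwz); auto).
    set (X := x u + s * (x v - x u)) in *.
    assert (P1 : 0 < s * (1 - s) * ((x v - x u) * (x v - x u))).
    { apply Rmult_lt_0_compat. apply Rmult_lt_0_compat; lra.
      destruct (Rlt_or_le 0 (x v - x u)); nra. }
    assert (P2 : 0 < t * (1 - t) * ((x z - x w) * (x z - x w))).
    { apply Rmult_lt_0_compat. apply Rmult_lt_0_compat; lra.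
      destruct (Rlt_or_le 0 (x z - x w)); nra. }
    assert (Hpg : pg u v = pg w z).
    { unfold sgnb in E2. destruct (pg u v), (pg w z); auto; lra. }
    assert (Hy : s * (1 - s) * ((x v - x u) * (x v - x u)) = t * (1 - t) * ((x z - x w) * (x z - x w))).
    { unfold sgnb in E2; rewrite Hpg in E2; destruct (pg w z); lra. }
    pose proof (Hnc u v w z Huv Hwz Hpg) as NI. unfold interleave in NI.
    assert (Hy1 : s * (1 - s) * ((x v - x u) * (x v - x u)) = (X - Rmin (x u) (x v)) * (Rmax (x u) (x v) - X)).
    { unfold X, Rmin, Rmax; destruct (Rle_dec (x u) (x v)); ring. }
    assert (Hy2 : t * (1 - t) * ((x z - x w) * (x z - x w)) = (X - Rmin (x w) (x z)) * (Rmax (x w) (x z) - X)).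
    { rewrite E1. unfold Rmin, Rmax; destruct (Rle_dec (x w) (x z)); ring. }
    assert (B1 : Rmin (x u) (x v) < X < Rmax (x u) (x v)).
    { unfold X, Rmin, Rmax; destruct (Rle_dec (x u) (x v)); split; nra. }
    assert (B2 : Rmin (x w) (x z) < X < Rmax (x w) (x z)).
    { rewrite E1. unfold Rmin, Rmax; destruct (Rle_dec (x w) (x z)); split; nra. }
    destruct (key_nest (Rmin (x u) (x v)) (Rmax (x u) (x v)) (Rmin (x w) (x z)) (Rmax (x w) (x z)) X)
      as [Emin Emax].
    { destruct (Rle_dec (x u) (x v)); unfold Rmin, Rmax; destruct (Rle_dec (x u) (x v)); lra. }
    { unfold Rmin, Rmax; destruct (Rle_dec (x w) (x z)); lra. }
    { exact B1. } { exact B2. } { rewrite <- Hy1, <- Hy2; exact Hy. }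
    { intro; apply NI; left; lra. }
    { intro; apply NI; right; lra. }
    apply Hnot.
    unfold Rmin, Rmax in Emin, Emax.
    destruct (Rle_dec (x u) (x v)), (Rle_dec (x w) (x z)).
    + left; split; apply Hinj; lra.
    + right; split; apply Hinj; lra.
    + right; split; apply Hinj; lra.
    + left; split; apply Hinj; lra.
Qed.

Definition btw {T} (lt : T -> T -> Prop) y a b := (lt a y /\ lt y b) \/ (lt b y /\ lt y a).
Definition outs {T} (lt : T -> T -> Prop) y a b := (lt y a /\ lt y b) \/ (lt a y /\ lt b y).
Definition niv {T} (lt : T -> T -> Prop) a b c d :=
  (btw lt c a b /\ outs lt d a b) \/ (btw lt d a b /\ outs lt c a b).

Lemma interleave_niv a b c d : interleave a b c d -> niv Rlt a b c d.
Proof.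
  unfold interleave, niv, btw, outs, Rmin, Rmax.
  destruct (Rle_dec a b), (Rle_dec c d); intros H;
  first [ left; split; [left; split; lra | first [left; split; lra | right; split; lra]]
        | left; split; [right; split; lra | first [left; split; lra | right; split; lra]]
        | right; split; [left; split; lra | first [left; split; lra | right; split; lra]]
        | right; split; [right; split; lra | first [left; split; lra | right; split; lra]]
        | idtac ].
  all: destruct H as [H|H]; 
  first [ left; split; [left; split; lra | first [left; split; lra | right; split; lra]]
        | left; split; [right; split; lra | first [left; split; lra | right; split; lra]]
        | right; split; [left; split; lra | first [left; split; lra | right; split; lra]]
        | right; split; [right; split; lra | first [left; split; lra | right; split; lra]] ].
Qed.

Lemma niv_map {T U} (ltT : T -> T -> Prop) (ltU : U -> U -> Prop) (f : T -> U) a b c d :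
  (forall x y, ltU (f x) (f y) -> ltT x y) ->
  niv ltU (f a) (f b) (f c) (f d) -> niv ltT a b c d.
Proof.
  intros Hm. unfold niv, btw, outs. intuition.
Qed.

Lemma book_planar_nat {V : Type} (adj : V -> V -> Prop) (x : V -> nat) (pg : V -> V -> bool) :
  (forall u v, x u = x v -> u = v) ->
  (forall u v, adj u v -> u <> v) ->
  (forall u v, adj u v -> pg u v = pg v u) ->
  (forall u v w z, adj u v -> adj w z -> pg u v = pg w z ->
      ~ niv lt (x u) (x v) (x w) (x z)) ->
  planar adj.
Proof.
  intros H1 H2 H3 H4.
  apply (book_planar adj (fun v => INR (x v)) pg); auto.
  - intros u v E. apply H1. apply INR_eq. exact E.
  - intros u v w z A B C D. apply (H4 u v w z A B C).
    apply (niv_map lt Rlt INR). { intros. apply INR_lt. auto. }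
    apply interleave_niv. exact D.
Qed.

End BookM.
Import BookM.
Close Scope R_scope.
Open Scope nat_scope.


Inductive hv := HB (c X : nat) | HA (c r : nat) | HD (c G i : nat) | HW (c i : nat).

Definition lpos (p : nat) (h : hv) : nat * nat :=
  match h with
  | HB _ X => (X + 1, 0)
  | HA _ 0 => (0, 4*p)
  | HA _ 1 => (2*p, 4*p+2)
  | HA _ 2 => (2*p + 1, 1)
  | HA _ _ => (4*p, 1)
  | HD _ G i => (G + 1, 2 + i)
  | HW _ i => (0, 4*p - 1 - i)
  end.

Definition inN (p r X : nat) : Prop :=
  match r with
  | 0 => X <= 2*p - 1 \/ X = 4*p - 1
  | 1 => X <= 2*p
  | 2 => 2*p - 1 <= X
  | _ => X = 0 \/ 2*p <= X
  end.

Definition adjH0 (p : nat) (h1 h2 : hv) : Prop :=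
  match h1, h2 with
  | HA c r, HB c' X => c = c' /\ c < 3 /\ X < 4*p /\ r < 4 /\ inN p r X
  | HD c G i, HB c' X => c = c' /\ c < 3 /\ G + 1 < 4*p /\ i < 4*p /\ (X = G \/ X = G + 1)
  | HW c i, HB c' X => c = c' /\ c < 3 /\ i < 4*p /\ (X = 0 \/ X = 4*p - 1)
  | _, _ => False
  end.

Definition hpg0 (p : nat) (h1 h2 : hv) : bool :=
  match h1, h2 with
  | HA _ r, HB _ _ => (r =? 1) || (r =? 3)
  | HD _ G _, HB _ X => X =? G
  | HW _ _, HB _ X => X =? 0
  | _, _ => false
  end.

Definition lexlt (a b : nat * nat) := fst a < fst b \/ (fst a = fst b /\ snd a < snd b).

Lemma niv_sym12 {T} (lt : T -> T -> Prop) a b c d : niv lt a b c d -> niv lt b a c d.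
Proof. unfold niv, btw, outs. tauto. Qed.
Lemma niv_sym34 {T} (lt : T -> T -> Prop) a b c d : niv lt a b c d -> niv lt a b d c.
Proof. unfold niv, btw, outs. tauto. Qed.

Ltac fin := unfold niv, btw, outs, lexlt; simpl; lia.

Lemma lnc p h1 h2 h3 h4 : 1 <= p -> adjH0 p h1 h2 -> adjH0 p h3 h4 -> hpg0 p h1 h2 = hpg0 p h3 h4 ->
  ~ niv lexlt (lpos p h1) (lpos p h2) (lpos p h3) (lpos p h4).
Proof.
  intros Hp A1 A2 Hg.
  destruct h1 as [c1 X1|c1 r1|c1 G1 i1|c1 i1]; destruct h2 as [c2 X2|c2 r2|c2 G2 i2|c2 i2]; simpl in A1; try contradiction;
  destruct h3 as [c3 X3|c3 r3|c3 G3 i3|c3 i3]; destruct h4 as [c4 X4|c4 r4|c4 G4 i4|c4 i4]; simpl in A2; try contradiction.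
  - destruct A1 as (_ & _ & HX1 & Hr1 & N1). destruct A2 as (_ & _ & HX3 & Hr3 & N3).
    destruct r1 as [|[|[|[|r1]]]]; try lia; destruct r3 as [|[|[|[|r3]]]]; try lia;
    simpl in Hg, N1, N3 |- *; try discriminate; fin.
  - destruct A1 as (_ & _ & HX1 & Hr1 & N1). destruct A2 as (_ & _ & HG & Hi & N3).
    simpl in Hg. destruct (Nat.eqb_spec X4 G3);
    destruct r1 as [|[|[|[|r1]]]]; try lia; 
    simpl in Hg, N1 |- *; try discriminate; fin.
  - destruct A1 as (_ & _ & HX1 & Hr1 & N1). destruct A2 as (_ & _ & Hi & N3).
    simpl in Hg. destruct (Nat.eqb_spec X4 0);
    destruct r1 as [|[|[|[|r1]]]]; try lia; 
    simpl in Hg, N1 |- *; try discriminate; fin.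
  - destruct A2 as (_ & _ & HX1 & Hr1 & N1). destruct A1 as (_ & _ & HG & Hi & N3).
    simpl in Hg. destruct (Nat.eqb_spec X2 G1);
    destruct r3 as [|[|[|[|r3]]]]; try lia; 
    simpl in Hg, N1 |- *; try discriminate; fin.
  - destruct A1 as (_ & _ & HG1 & Hi1 & N1). destruct A2 as (_ & _ & HG & Hi & N3).
    simpl in Hg. destruct (Nat.eqb_spec X4 G3); destruct (Nat.eqb_spec X2 G1);
    simpl in Hg; try discriminate; fin.
  - destruct A1 as (_ & _ & HG1 & Hi1 & N1). destruct A2 as (_ & _ & Hi & N3).
    simpl in Hg. destruct (Nat.eqb_spec X4 0); destruct (Nat.eqb_spec X2 G1);
    simpl in Hg; try discriminate; fin.
  - destruct A2 as (_ & _ & HX1 & Hr1 & N1). destruct A1 as (_ & _ & Hi & N3).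
    simpl in Hg. destruct (Nat.eqb_spec X2 0);
    destruct r3 as [|[|[|[|r3]]]]; try lia; 
    simpl in Hg, N1 |- *; try discriminate; fin.
  - destruct A2 as (_ & _ & HG1 & Hi1 & N1). destruct A1 as (_ & _ & Hi & N3).
    simpl in Hg. destruct (Nat.eqb_spec X2 0); destruct (Nat.eqb_spec X4 G3);
    simpl in Hg; try discriminate; fin.
  - destruct A1 as (_ & _ & Hi1 & N1). destruct A2 as (_ & _ & Hi & N3).
    simpl in Hg. destruct (Nat.eqb_spec X4 0); destruct (Nat.eqb_spec X2 0);
    simpl in Hg; try discriminate; fin.
Qed.

Definition SO (p c : nat) := c * (4*p + 2).
Definition hcopy (h : hv) := match h with HB c _ | HA c _ | HD c _ _ | HW c _ => c end.
Definition hpos (p : nat) (h : hv) : nat * nat :=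
  (SO p (hcopy h) + fst (lpos p h), snd (lpos p h)).

Definition hvalid (p : nat) (h : hv) : Prop :=
  match h with
  | HB c X => c < 3 /\ X < 4*p
  | HA c r => c < 3 /\ r < 4
  | HD c G i => c < 3 /\ G + 1 < 4*p /\ i < 4*p
  | HW c i => c < 3 /\ i < 4*p
  end.

Lemma lpos_bound p h : 1 <= p -> hvalid p h -> fst (lpos p h) <= 4*p /\ snd (lpos p h) < 8*p.
Proof.
  intros Hp V. destruct h as [c X|c r|c G i|c i]; simpl in V |- *.
  - lia.
  - destruct r as [|[|[|[|r]]]]; simpl; lia.
  - lia.
  - lia.
Qed.

Lemma adjH0_valid p h1 h2 : adjH0 p h1 h2 -> hvalid p h1 /\ hvalid p h2.
Proof.
  destruct h1, h2; simpl; intros; repeat match goal with H: _ /\ _ |- _ => destruct H end; subst; try tauto; repeat split; auto; lia.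
Qed.

Lemma adjH0_copy p h1 h2 : adjH0 p h1 h2 -> hcopy h1 = hcopy h2.
Proof. destruct h1, h2; simpl; intuition. Qed.

Lemma niv_sep (a b c d : nat * nat) R :
  fst a <= R -> fst b <= R -> R < fst c -> R < fst d -> ~ niv lexlt a b c d.
Proof.
  destruct a, b, c, d; unfold niv, btw, outs, lexlt; simpl; lia.
Qed.

Lemma niv_sep2 (a b c d : nat * nat) R :
  fst c <= R -> fst d <= R -> R < fst a -> R < fst b -> ~ niv lexlt a b c d.
Proof.
  destruct a, b, c, d; unfold niv, btw, outs, lexlt; simpl; lia.
Qed.

Lemma Hnc p h1 h2 h3 h4 : 1 <= p -> adjH0 p h1 h2 -> adjH0 p h3 h4 -> hpg0 p h1 h2 = hpg0 p h3 h4 ->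
  ~ niv lexlt (hpos p h1) (hpos p h2) (hpos p h3) (hpos p h4).
Proof.
  intros Hp A1 A2 Hg.
  pose proof (adjH0_valid _ _ _ A1) as [V1 V2].
  pose proof (adjH0_valid _ _ _ A2) as [V3 V4].
  pose proof (adjH0_copy _ _ _ A1) as C1.
  pose proof (adjH0_copy _ _ _ A2) as C2.
  pose proof (lpos_bound p h1 Hp V1). pose proof (lpos_bound p h2 Hp V2).
  pose proof (lpos_bound p h3 Hp V3). pose proof (lpos_bound p h4 Hp V4).
  assert (Hc1 : hcopy h1 < 3) by (destruct h1; simpl in *; tauto).
  assert (Hc3 : hcopy h3 < 3) by (destruct h3; simpl in *; tauto).
  unfold hpos. rewrite <- C1, <- C2.
  destruct (lt_eq_lt_dec (hcopy h1) (hcopy h3)) as [[L|E]|L].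
  - apply (niv_sep _ _ _ _ (SO p (hcopy h1) + 4*p)); simpl; try lia;
    unfold SO; destruct (hcopy h1) as [|[|[|]]]; destruct (hcopy h3) as [|[|[|]]]; lia.
  - rewrite E. intro N. apply (lnc p h1 h2 h3 h4 Hp A1 A2 Hg).
    revert N. apply (niv_map lexlt lexlt (fun q => (SO p (hcopy h3) + fst q, snd q))). intros [s1 m1] [s2 m2]. unfold lexlt; simpl. lia.
  - apply (niv_sep2 _ _ _ _ (SO p (hcopy h3) + 4*p)); simpl; try lia;
    unfold SO; destruct (hcopy h1) as [|[|[|]]]; destruct (hcopy h3) as [|[|[|]]]; lia.
Qed.

Definition hpg (p : nat) (h1 h2 : hv) : bool :=
  match h1 with HB _ _ => hpg0 p h2 h1 | _ => hpg0 p h1 h2 end.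

Definition adjH p h1 h2 := adjH0 p h1 h2 \/ adjH0 p h2 h1.

Lemma adjH0_nonB p h1 h2 : adjH0 p h1 h2 -> (match h1 with HB _ _ => False | _ => True end) /\
   (match h2 with HB _ _ => True | _ => False end).
Proof. destruct h1, h2; simpl; tauto. Qed.

Lemma hpg_sym p h1 h2 : adjH p h1 h2 -> hpg p h1 h2 = hpg p h2 h1.
Proof.
  intros [A|A]; apply adjH0_nonB in A; destruct h1, h2; simpl in *; tauto.
Qed.

Lemma hpg_or p h1 h2 : adjH0 p h1 h2 -> hpg p h1 h2 = hpg0 p h1 h2.
Proof. intros A; apply adjH0_nonB in A; destruct h1, h2; simpl in *; tauto. Qed.

Lemma HncS p h1 h2 h3 h4 : 1 <= p -> adjH p h1 h2 -> adjH p h3 h4 -> hpg p h1 h2 = hpg p h3 h4 ->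
  ~ niv lexlt (hpos p h1) (hpos p h2) (hpos p h3) (hpos p h4).
Proof.
  intros Hp A1 A2 Hg N.
  assert (S1 : hpg p h1 h2 = hpg p h2 h1) by (apply hpg_sym; auto).
  assert (S2 : hpg p h3 h4 = hpg p h4 h3) by (apply hpg_sym; auto).
  destruct A1 as [A1|A1]; destruct A2 as [A2|A2].
  - rewrite (hpg_or _ _ _ A1), (hpg_or _ _ _ A2) in Hg. exact (Hnc p h1 h2 h3 h4 Hp A1 A2 Hg N).
  - rewrite S2, (hpg_or _ _ _ A1), (hpg_or _ _ _ A2) in Hg.
    apply niv_sym34 in N. exact (Hnc p h1 h2 h4 h3 Hp A1 A2 Hg N).
  - rewrite S1, (hpg_or _ _ _ A1), (hpg_or _ _ _ A2) in Hg.
    apply niv_sym12 in N. exact (Hnc p h2 h1 h3 h4 Hp A1 A2 Hg N).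
  - rewrite S1, S2, (hpg_or _ _ _ A1), (hpg_or _ _ _ A2) in Hg.
    apply niv_sym12, niv_sym34 in N. exact (Hnc p h2 h1 h4 h3 Hp A1 A2 Hg N).
Qed.

Lemma hpos_inj p h1 h2 : 1 <= p -> hvalid p h1 -> hvalid p h2 -> hpos p h1 = hpos p h2 -> h1 = h2.
Proof.
  intros Hp V1 V2 E. unfold hpos, SO in E. injection E. clear E. intros E2 E1.
  destruct h1 as [c1 X1|c1 r1|c1 G1 i1|c1 i1]; destruct h2 as [c2 X2|c2 r2|c2 G2 i2|c2 i2];
  simpl in V1, V2, E1, E2 |- *;
  destruct V1 as [Hc1 V1]; destruct V2 as [Hc2 V2];
  destruct c1 as [|[|[|]]]; try lia; destruct c2 as [|[|[|]]]; try lia;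
  try (destruct r1 as [|[|[|[|]]]]; try lia); try (destruct r2 as [|[|[|[|]]]]; try lia);
  simpl in *; f_equal; lia.
Qed.



Ltac modq t m K :=
  let q := fresh "q" in let r := fresh "r" in let Eq := fresh "Eq" in let Er := fresh "Er" in
  let He := fresh "He" in let Hr := fresh "Hr" in let Hq := fresh "Hq" in
  pose proof (Nat.div_mod_eq t m) as He;
  assert (Hr : t mod m < m) by (apply Nat.mod_upper_bound; lia);
  assert (Hq : t / m < K) by (apply Nat.Div0.div_lt_upper_bound; lia);
  remember (t / m) as q eqn:Eq; remember (t mod m) as r eqn:Er; clear Eq Er.

Definition dd p a j := (j + 4*p - a) mod (4*p).
Definition isface p a j : bool :=
  let d := dd p a j in
  if a mod 4 <? 2 then (1 <=? d) && (d <=? 2*p+1) else (2*p-1 <=? d) && (d <=? 4*p-1).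
Definition xq p a j : nat :=
  let d := dd p a j in
  if isface p a j then 0 else if a mod 4 <? 2 then (d - 2*p)/2 else (d+1)/2.
Definition kc p a j := (a/4 + p - xq p a j) mod p.

Definition base p r := match r with 0 => 2*p-2 | 1 => 2*p-1 | 2 => 4*p-1 | _ => 0 end.

Definition roleA p c k a : hv :=
  let x := a / 4 in let r := a mod 4 in
  if x =? k then HA c r else
  let x' := (x + p - k) mod p in
  let G := (base p r + 6 * x') mod (4*p) in
  if G =? 4*p - 1 then HW c (r*p + x') else HD c G (r*p + x').

Definition roleB p c k j : hv := HB c ((j + 8*p - (4*k+2)) mod (4*p)).

Lemma cong_small n A B X Y : X < n -> Y <= n -> X + n*A = Y + n*B -> X = Y \/ (Y = n /\ X = 0).
Proof.
  intros HX HY E.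
  destruct (lt_eq_lt_dec A B) as [[H|H]|H].
  - assert (n*A + n <= n*B) by (replace (n*A+n) with (n*(S A)) by ring; apply Nat.mul_le_mono_l; lia). lia.
  - subst; lia.
  - assert (n*B + n <= n*A) by (replace (n*B+n) with (n*(S B)) by ring; apply Nat.mul_le_mono_l; lia). lia.
Qed.

Lemma core p c a j : 1 <= p -> c < 3 -> a < 4*p -> j < 4*p -> a <> j ->
  adjH0 p (roleA p c (kc p a j) a) (roleB p c (kc p a j) j).
Proof.
  intros Hp Hc Ha Hj Haj.
  unfold roleA, roleB, kc, xq, isface, dd.
  modq a 4 p. rename q into x, r into rr.
  modq (j + 4*p - a) (4*p) 2. rename q into w, r into d.
  assert (Hd0 : d <> 0) by (destruct w as [|[|]]; lia).
  destruct (Nat.ltb_spec rr 2) as [Hr2|Hr2].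
  - destruct (Nat.leb_spec 1 d); destruct (Nat.leb_spec d (2*p+1)); try lia; cbn [andb].
    +
      rewrite Nat.sub_0_r. replace ((x + p) mod p) with x.
      2:{ modq (x+p) p 2. destruct q as [|[|]]; lia. }
      rewrite Nat.eqb_refl.
      modq (j + 8*p - (4*x+2)) (4*p) 3.
      cbn [adjH0]. repeat split; try lia.
      destruct rr as [|[|]]; try lia; cbn [inN];
      destruct w as [|[|]]; destruct q as [|[|[|]]]; lia.
    +
      modq (d - 2*p) 2 p. rename q into xp, r into e.
      modq (x + p - xp) p 2. rename q into w2, r into k.
      assert (Hkx : x <> k) by (destruct w2 as [|[|]]; lia).
      destruct (Nat.eqb_spec x k); [lia|].
      modq (x + p - k) p 2. rename q into w3, r into x'.
      assert (Hx' : x' = xp) by (destruct w2 as [|[|]]; destruct w3 as [|[|]]; lia). subst x'.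
      assert (Hb : base p rr <= 4*p-1) by (destruct rr as [|[|]]; cbn [base]; lia).
      modq (base p rr + 6 * xp) (4*p) 3.
      rename q into w4, r into G.
      modq (j + 8*p - (4*k+2)) (4*p) 3. rename q into q5, r into X.
      assert (Key : X = G + e \/ (G + e = 4*p /\ X = 0)).
      { apply (cong_small (4*p) q5 (w4 + w + w2)); try lia.
        destruct rr as [|[|]]; try lia; cbn [base] in *; lia. }
            destruct (Nat.eqb_spec G (4*p-1)); cbn [adjH0]; repeat split; try lia;
      destruct rr as [|[|]]; lia.
  - destruct (Nat.leb_spec (2*p-1) d); destruct (Nat.leb_spec d (4*p-1)); try lia; cbn [andb].
    + rewrite Nat.sub_0_r. replace ((x + p) mod p) with x.
      2:{ modq (x+p) p 2. destruct q as [|[|]]; lia. }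
      rewrite Nat.eqb_refl.
      modq (j + 8*p - (4*x+2)) (4*p) 3.
      cbn [adjH0]. repeat split; try lia.
      destruct rr as [|[|[|[|]]]]; try lia; cbn [inN];
      destruct w as [|[|]]; destruct q as [|[|[|]]]; lia.
    + modq (d + 1) 2 p. rename q into xp, r into e.
      modq (x + p - xp) p 2. rename q into w2, r into k.
      assert (Hkx : x <> k) by (destruct w2 as [|[|]]; lia).
      destruct (Nat.eqb_spec x k); [lia|].
      modq (x + p - k) p 2. rename q into w3, r into x'.
      assert (Hx' : x' = xp) by (destruct w2 as [|[|]]; destruct w3 as [|[|]]; lia). subst x'.
      assert (Hb : base p rr <= 4*p-1) by (destruct rr as [|[|[|[|]]]]; cbn [base]; lia).
      modq (base p rr + 6 * xp) (4*p) 3.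
      rename q into w4, r into G.
      modq (j + 8*p - (4*k+2)) (4*p) 3. rename q into q5, r into X.
      assert (Key : X = G + e \/ (G + e = 4*p /\ X = 0)).
      { destruct rr as [|[|[|[|]]]]; try lia; cbn [base] in *.
        - apply (cong_small (4*p) (q5 + 1) (w4 + w + w2)); lia.
        - apply (cong_small (4*p) q5 (w4 + w + w2)); lia. }
      destruct (Nat.eqb_spec G (4*p-1)); cbn [adjH0]; repeat split; try lia;
      destruct rr as [|[|[|[|]]]]; lia.
Qed.


Definition VV p := (Knnn_V (4*p) * bool)%type.
Definition Gadj p : VV p -> VV p -> Prop := kron (Knnn_adj (4*p)) K2_adj.
Definition part {p} (v : VV p) : nat := proj1_sig (fst (fst v)).
Definition ix {p} (v : VV p) : nat := proj1_sig (snd (fst v)).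
Definition bb {p} (v : VV p) : bool := snd v.
Definition grp (i : nat) (b : bool) : nat :=
  match i, b with 0, false => 0 | 1, true => 1 | 2, false => 2 | 0, true => 3 | 1, false => 4 | _, _ => 5 end.
Definition gv {p} (v : VV p) : nat := grp (part v) (bb v).
Definition Sg (g : nat) : nat := if g =? 5 then 0 else S g.

Lemma part_lt {p} (v : VV p) : part v < 3.
Proof. exact (proj2_sig (fst (fst v))). Qed.
Lemma ix_lt {p} (v : VV p) : ix v < 4*p.
Proof. exact (proj2_sig (snd (fst v))). Qed.
Lemma gv_lt {p} (v : VV p) : gv v < 6.
Proof. unfold gv. pose proof (part_lt v). destruct (part v) as [|[|[|]]]; destruct (bb v); simpl; lia. Qed.

Lemma vert_eq {p} (u v : VV p) : part u = part v -> ix u = ix v -> bb u = bb v -> u = v.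
Proof.
  destruct u as [[[i hi] [a ha]] b], v as [[[i' hi'] [a' ha']] b']; unfold part, ix, bb; simpl.
  intros E1 E2 E3. subst. rewrite (le_unique _ _ hi hi'), (le_unique _ _ ha ha'). reflexivity.
Qed.

Lemma gv_eq {p} (u v : VV p) : gv u = gv v -> part u = part v /\ bb u = bb v.
Proof.
  unfold gv. pose proof (part_lt u). pose proof (part_lt v).
  destruct (part u) as [|[|[|]]]; destruct (part v) as [|[|[|]]]; destruct (bb u), (bb v); simpl;
  intros; try lia; auto.
Qed.

Lemma gv_inj {p} (u v : VV p) : gv u = gv v -> ix u = ix v -> u = v.
Proof. intros E1 E2. destruct (gv_eq u v E1). apply vert_eq; auto. Qed.

Lemma adj_iff {p} (u v : VV p) : Gadj p u v <-> (gv v = Sg (gv u) \/ gv u = Sg (gv v)).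
Proof.
  unfold Gadj, kron, Knnn_adj, K2_adj. fold (@part p u) (@part p v). fold (@bb p u) (@bb p v).
  unfold gv. pose proof (part_lt u). pose proof (part_lt v).
  destruct (part u) as [|[|[|]]]; destruct (part v) as [|[|[|]]]; destruct (bb u), (bb v); simpl;
  try lia; split; intros; try tauto; try (destruct H1; congruence); try (split; [lia|congruence]);
  try (destruct H1 as [H1|H1]; discriminate).
Qed.

Lemma adj_neq {p} (u v : VV p) : Gadj p u v -> u <> v.
Proof. intros [H _] E. subst. apply H. reflexivity. Qed.

Lemma kc_lt p a j : 1 <= p -> kc p a j < p.
Proof. intros. unfold kc. apply Nat.mod_upper_bound. lia. Qed.

Definition lab p (u v : VV p) : nat :=
  if ix u =? ix v then 2*p else (gv u mod 2) * p + kc p (ix u) (ix v).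
Definition cc p (u v : VV p) : nat := if gv v =? Sg (gv u) then lab p u v else lab p v u.

Lemma Sg_ne g : g < 6 -> Sg (Sg g) <> g.
Proof. intros. unfold Sg. destruct g as [|[|[|[|[|[|]]]]]]; simpl; lia. Qed.
Lemma Sg_ne1 g : g < 6 -> Sg g <> g.
Proof. intros. unfold Sg. destruct g as [|[|[|[|[|[|]]]]]]; simpl; lia. Qed.

Lemma cc_sym p (u v : VV p) : Gadj p u v -> cc p u v = cc p v u.
Proof.
  intros A. apply adj_iff in A. unfold cc. pose proof (gv_lt u). pose proof (gv_lt v).
  destruct A as [A|A].
  - rewrite A, Nat.eqb_refl. destruct (Nat.eqb_spec (gv u) (Sg (Sg (gv u)))); auto.
    exfalso. symmetry in e. apply (Sg_ne _ H e).
  - rewrite A, Nat.eqb_refl. destruct (Nat.eqb_spec (gv v) (Sg (Sg (gv v)))); auto.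
    exfalso. symmetry in e. apply (Sg_ne _ H0 e).
Qed.

Lemma lab_lt p (u v : VV p) : 1 <= p -> lab p u v < 2*p+1.
Proof.
  intros Hp. unfold lab. destruct (ix u =? ix v). lia.
  pose proof (kc_lt p (ix u) (ix v) Hp). assert (gv u mod 2 < 2) by (apply Nat.mod_upper_bound; lia).
  destruct (gv u mod 2) as [|[|]]; lia.
Qed.

Lemma cc_lt p (u v : VV p) : 1 <= p -> cc p u v < 2*p+1.
Proof. intros. unfold cc. destruct (_ =? _); apply lab_lt; auto. Qed.

Lemma orient p (P : VV p -> VV p -> Prop) u v :
  Gadj p u v ->
  (forall a b, gv b = Sg (gv a) -> P a b) ->
  P u v \/ P v u.
Proof.
  intros A H. apply adj_iff in A. destruct A as [A|A]; [left|right]; apply H; auto.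
Qed.

Lemma cc_or p (u v : VV p) : gv v = Sg (gv u) -> cc p u v = lab p u v.
Proof. intros E. unfold cc. rewrite E, Nat.eqb_refl. reflexivity. Qed.

Lemma lab_2p p (u v : VV p) : 1 <= p -> lab p u v = 2*p -> ix u = ix v.
Proof.
  intros Hp. unfold lab. destruct (Nat.eqb_spec (ix u) (ix v)); auto.
  pose proof (kc_lt p (ix u) (ix v) Hp). assert (gv u mod 2 < 2) by (apply Nat.mod_upper_bound; lia).
  destruct (gv u mod 2) as [|[|]]; lia.
Qed.

Lemma leftover_planar p : 1 <= p -> planar (fun u v : VV p => Gadj p u v /\ cc p u v = 2*p).
Proof.
  intros Hp.
  apply (book_planar_nat _ (fun v => 6 * ix v + gv v) (fun _ _ => true)).
  - intros u v E. pose proof (gv_lt u). pose proof (gv_lt v).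
    apply gv_inj; lia.
  - intros u v [A _]. apply adj_neq; auto.
  - auto.
  - intros u v w z [A1 C1] [A2 C2] _.
    assert (E1 : (gv v = Sg (gv u) \/ gv u = Sg (gv v)) /\ ix u = ix v).
    { apply adj_iff in A1 as A1'. split; auto. unfold cc in C1.
      destruct (gv v =? Sg (gv u)); [|symmetry]; apply (lab_2p p); auto. }
    assert (E2 : (gv z = Sg (gv w) \/ gv w = Sg (gv z)) /\ ix w = ix z).
    { apply adj_iff in A2 as A2'. split; auto. unfold cc in C2.
      destruct (gv z =? Sg (gv w)); [|symmetry]; apply (lab_2p p); auto. }
    pose proof (gv_lt u). pose proof (gv_lt v). pose proof (gv_lt w). pose proof (gv_lt z).
    destruct E1 as [[G1|G1] I1]; destruct E2 as [[G2|G2] I2]; rewrite I1, I2; rewrite G1, G2;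
    unfold Sg;
    [ destruct (gv u) as [|[|[|[|[|[|]]]]]]; destruct (gv w) as [|[|[|[|[|[|]]]]]]
    | destruct (gv u) as [|[|[|[|[|[|]]]]]]; destruct (gv z) as [|[|[|[|[|[|]]]]]]
    | destruct (gv v) as [|[|[|[|[|[|]]]]]]; destruct (gv w) as [|[|[|[|[|[|]]]]]]
    | destruct (gv v) as [|[|[|[|[|[|]]]]]]; destruct (gv z) as [|[|[|[|[|[|]]]]]] ];
    simpl; try lia; unfold niv, btw, outs; lia.
Qed.

Definition role p (m k : nat) (v : VV p) : hv :=
  if gv v mod 2 =? m then roleA p (gv v / 2) k (ix v)
  else roleB p (((gv v + 5) mod 6) / 2) k (ix v).

Definition enc p (q : nat * nat) : nat := 8*p * fst q + snd q.

Lemma enc_lt p (a b : nat * nat) : snd a < 8*p -> snd b < 8*p -> enc p a < enc p b -> lexlt a b.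
Proof.
  destruct a as [s1 m1], b as [s2 m2]; unfold enc, lexlt; simpl. intros H1 H2 H.
  destruct (lt_eq_lt_dec s1 s2) as [[L|E]|L]; [left; auto| subst; right; split; auto; lia|].
  exfalso. assert (8*p*s2 + 8*p <= 8*p*s1).
  { replace (8*p*s2 + 8*p) with (8*p*(S s2)) by ring. apply Nat.mul_le_mono_l. lia. }
  lia.
Qed.

Lemma enc_inj p (a b : nat * nat) : snd a < 8*p -> snd b < 8*p -> enc p a = enc p b -> a = b.
Proof.
  intros H1 H2 E.
  destruct (lt_eq_lt_dec (enc p a) (enc p b)) as [[L|_]|L].
  - lia.
  - destruct a as [s1 m1], b as [s2 m2]. unfold enc in E; simpl in *.
    destruct (lt_eq_lt_dec s1 s2) as [[L|Q]|L].
    + assert (8*p*s1 + 8*p <= 8*p*s2).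
      { replace (8*p*s1 + 8*p) with (8*p*(S s1)) by ring. apply Nat.mul_le_mono_l. lia. }
      lia.
    + subst. f_equal. lia.
    + assert (8*p*s2 + 8*p <= 8*p*s1).
      { replace (8*p*s2 + 8*p) with (8*p*(S s2)) by ring. apply Nat.mul_le_mono_l. lia. }
      lia.
  - lia.
Qed.

Lemma mul_add_uniq p a b c d : b < p -> d < p -> a * p + b = c * p + d -> a = c /\ b = d.
Proof.
  intros Hb Hd E.
  destruct (lt_eq_lt_dec a c) as [[L|Q]|L].
  - assert (a * p + p <= c * p) by (replace (a*p+p) with (S a * p) by ring; apply Nat.mul_le_mono_r; lia). lia.
  - subst. lia.
  - assert (c * p + p <= a * p) by (replace (c*p+p) with (S c * p) by ring; apply Nat.mul_le_mono_r; lia). lia.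
Qed.

Lemma roleA_valid p c k a : 1 <= p -> c < 3 -> a < 4*p -> hvalid p (roleA p c k a).
Proof.
  intros Hp Hc Ha. unfold roleA.
  assert (a mod 4 < 4) by (apply Nat.mod_upper_bound; lia).
  assert ((a / 4 + p - k) mod p < p) by (apply Nat.mod_upper_bound; lia).
  assert ((base p (a mod 4) + 6 * ((a / 4 + p - k) mod p)) mod (4 * p) < 4*p) by (apply Nat.mod_upper_bound; lia).
  destruct (a / 4 =? k). cbn [hvalid]; split; lia.
  destruct (Nat.eqb_spec ((base p (a mod 4) + 6 * ((a / 4 + p - k) mod p)) mod (4 * p)) (4*p-1)); cbn [hvalid];
  repeat split; try lia; destruct (a mod 4) as [|[|[|[|]]]]; lia.
Qed.

Lemma roleB_valid p c k j : 1 <= p -> c < 3 -> hvalid p (roleB p c k j).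
Proof.
  intros Hp Hc. unfold roleB; simpl. split; auto. apply Nat.mod_upper_bound; lia.
Qed.

Lemma role_valid p m k (v : VV p) : 1 <= p -> hvalid p (role p m k v).
Proof.
  intros Hp. unfold role. pose proof (gv_lt v).
  destruct (gv v mod 2 =? m).
  - apply roleA_valid; auto. apply Nat.Div0.div_lt_upper_bound; lia. apply ix_lt.
  - apply roleB_valid; auto. apply Nat.Div0.div_lt_upper_bound.
    assert ((gv v + 5) mod 6 < 6) by (apply Nat.mod_upper_bound; lia). lia.
Qed.

Lemma roleB_inj p c k j j' : 1 <= p -> k < p -> j < 4*p -> j' < 4*p ->
  roleB p c k j = roleB p c k j' -> j = j'.
Proof.
  intros Hp Hk Hj Hj' E0. unfold roleB in E0.
  pose proof (f_equal (fun h => match h with HB _ X => X | _ => 0 end) E0) as E. cbv beta iota in E. clear E0.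
  modq (j + 8*p - (4*k+2)) (4*p) 3. modq (j' + 8*p - (4*k+2)) (4*p) 3.
  subst. destruct q as [|[|[|]]]; destruct q0 as [|[|[|]]]; lia.
Qed.

Definition hid (h : hv) : nat := match h with HA _ r => r | HD _ _ i => i | HW _ i => i | HB _ X => X end.

Lemma roleA_inj p c k a a' : 1 <= p -> k < p -> a < 4*p -> a' < 4*p ->
  roleA p c k a = roleA p c k a' -> a = a'.
Proof.
  intros Hp Hk Ha Ha' E. unfold roleA in E.
  pose proof (Nat.div_mod_eq a 4). pose proof (Nat.div_mod_eq a' 4).
  assert (R1 : a mod 4 < 4) by (apply Nat.mod_upper_bound; lia).
  assert (R2 : a' mod 4 < 4) by (apply Nat.mod_upper_bound; lia).
  assert (X1 : a / 4 < p) by (apply Nat.Div0.div_lt_upper_bound; lia).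
  assert (X2 : a' / 4 < p) by (apply Nat.Div0.div_lt_upper_bound; lia).
  assert (Y1 : (a / 4 + p - k) mod p < p) by (apply Nat.mod_upper_bound; lia).
  assert (Y2 : (a' / 4 + p - k) mod p < p) by (apply Nat.mod_upper_bound; lia).
  assert (Key : a mod 4 = a' mod 4 -> (a / 4 + p - k) mod p = (a' / 4 + p - k) mod p -> a = a').
  { intros Q1 Q2. modq (a / 4 + p - k) p 2. modq (a' / 4 + p - k) p 2. subst.
    destruct q as [|[|]]; destruct q0 as [|[|]]; lia. }
  destruct (Nat.eqb_spec (a/4) k); destruct (Nat.eqb_spec (a'/4) k).
  - apply (f_equal hid) in E; cbn [hid] in E. lia.
  - destruct (_ =? _) in E; discriminate.
  - destruct (_ =? _) in E; discriminate.
  - destruct (_ =? _) in E; destruct (_ =? _) in E; try discriminate; apply (f_equal hid) in E; cbn [hid] in E;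
    match goal with H : ?x * p + ?y = ?x' * p + ?y' |- _ =>
      destruct (mul_add_uniq p x y x' y' ltac:(auto) ltac:(auto) H) end; apply Key; auto.
Qed.

Lemma roleA_copy p c k a : hcopy (roleA p c k a) = c.
Proof. unfold roleA. destruct (_ =? _); [reflexivity|]. destruct (_ =? _); reflexivity. Qed.

Lemma roleA_notB p c k a c' X : roleA p c k a <> HB c' X.
Proof. unfold roleA. destruct (_ =? _); [discriminate|]. destruct (_ =? _); discriminate. Qed.

Lemma gv_mod2 {p} (v : VV p) : gv v = 2 * (gv v / 2) + gv v mod 2.
Proof. apply Nat.div_mod_eq. Qed.

Lemma role_inj p m k (u v : VV p) : 1 <= p -> m < 2 -> k < p -> role p m k u = role p m k v -> u = v.
Proof.
  intros Hp Hm Hk E. unfold role in E. pose proof (gv_lt u). pose proof (gv_lt v).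
  pose proof (ix_lt u). pose proof (ix_lt v).
  destruct (Nat.eqb_spec (gv u mod 2) m); destruct (Nat.eqb_spec (gv v mod 2) m).
  - assert (Ec : gv u / 2 = gv v / 2).
    { pose proof (f_equal hcopy E) as E'. rewrite !roleA_copy in E'. exact E'. }
    assert (Eg : gv u = gv v) by (rewrite (gv_mod2 u), (gv_mod2 v); lia).
    rewrite Ec in E. apply roleA_inj in E; auto. apply gv_inj; auto.
  - exfalso. unfold roleB in E. eapply roleA_notB; exact E.
  - exfalso. unfold roleB in E. eapply roleA_notB; symmetry; exact E.
  - assert (Ec : ((gv u + 5) mod 6) / 2 = ((gv v + 5) mod 6) / 2).
    { pose proof (f_equal hcopy E) as E'. unfold roleB in E'. exact E'. }
    assert (Eg : gv u = gv v).
    { revert Ec n n0. destruct (gv u) as [|[|[|[|[|[|]]]]]]; destruct (gv v) as [|[|[|[|[|[|]]]]]];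
      simpl; intros; lia. }
    rewrite Ec in E. apply roleB_inj in E; auto. apply gv_inj; auto.
Qed.

Lemma edge_or p m k (u v : VV p) : 1 <= p -> m < 2 -> k < p ->
  gv v = Sg (gv u) -> lab p u v = m*p + k -> adjH0 p (role p m k u) (role p m k v).
Proof.
  intros Hp Hm Hk G L. unfold lab in L.
  destruct (Nat.eqb_spec (ix u) (ix v)) as [Ei|Ni].
  { exfalso. destruct m as [|[|]]; lia. }
  pose proof (kc_lt p (ix u) (ix v) Hp) as Kl.
  assert (M2 : gv u mod 2 < 2) by (apply Nat.mod_upper_bound; lia).
  destruct (mul_add_uniq p _ _ _ _ Kl Hk L) as [Pm Pk].
  pose proof (gv_lt u) as Gu.
  unfold role. rewrite Pm, Nat.eqb_refl.
  assert (Hv : gv v mod 2 =? m = false).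
  { apply Nat.eqb_neq. rewrite <- Pm, G. clear - Gu. unfold Sg.
    destruct (gv u) as [|[|[|[|[|[|]]]]]]; simpl; lia. }
  rewrite Hv.
  assert (Hc : ((gv v + 5) mod 6) / 2 = gv u / 2).
  { rewrite G. clear - Gu. unfold Sg. destruct (gv u) as [|[|[|[|[|[|]]]]]]; simpl; lia. }
  rewrite Hc, <- Pk. apply core; auto.
  - apply Nat.Div0.div_lt_upper_bound; lia.
  - apply ix_lt.
  - apply ix_lt.
Qed.

Lemma edge_class p m k (u v : VV p) : 1 <= p -> m < 2 -> k < p ->
  Gadj p u v -> cc p u v = m*p + k -> adjH p (role p m k u) (role p m k v).
Proof.
  intros Hp Hm Hk A C. apply adj_iff in A as A'. destruct A' as [G|G].
  - left. apply edge_or; auto. rewrite <- C. symmetry. apply cc_or; auto.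
  - right. apply edge_or; auto. rewrite <- C, cc_sym. symmetry; apply cc_or; auto.
    apply adj_iff; auto.
Qed.

Lemma niv_map_P {T U} (ltT : T -> T -> Prop) (ltU : U -> U -> Prop) (f : T -> U) (P : T -> Prop) a b c d :
  (forall x y, P x -> P y -> ltU (f x) (f y) -> ltT x y) ->
  P a -> P b -> P c -> P d ->
  niv ltU (f a) (f b) (f c) (f d) -> niv ltT a b c d.
Proof.
  intros Hm Pa Pb Pc Pd. unfold niv, btw, outs.
  intros [[[[H1 H2]|[H1 H2]] [[H3 H4]|[H3 H4]]]|[[[H1 H2]|[H1 H2]] [[H3 H4]|[H3 H4]]]];
  [left; split; [left|left] | left; split; [left|right] | left; split; [right|left] | left; split; [right|right]
  |right; split; [left|left] | right; split; [left|right] | right; split; [right|left] | right; split; [right|right]];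
  split; apply Hm; auto.
Qed.

Lemma main_planar p m k : 1 <= p -> m < 2 -> k < p ->
  planar (fun u v : VV p => Gadj p u v /\ cc p u v = m*p + k).
Proof.
  intros Hp Hm Hk.
  apply (book_planar_nat _ (fun v => enc p (hpos p (role p m k v))) (fun u v => hpg p (role p m k u) (role p m k v))).
  - intros u v E. apply (role_inj p m k); auto.
    apply (hpos_inj p); try apply role_valid; auto.
    apply (enc_inj p); auto; apply (lpos_bound p); auto; apply role_valid; auto.
  - intros u v [A _]. apply adj_neq; auto.
  - intros u v [A C]. apply hpg_sym. apply edge_class; auto.
  - intros u v w z [A1 C1] [A2 C2] Hg N.
    apply (HncS p (role p m k u) (role p m k v) (role p m k w) (role p m k z) Hp); auto.
    + apply edge_class; auto.
    + apply edge_class; auto.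
    + revert N. apply (niv_map_P lexlt lt (enc p) (fun q => snd q < 8*p));
      try (intros a b Pa Pb L; apply (enc_lt p); auto);
      apply (lpos_bound p); auto; apply role_valid; auto.
Qed.

Theorem partition p : 1 <= p ->
  planar_edge_partition (Gadj p) (2*p+1).
Proof.
  intros Hp. exists (cc p). split.
  - intros u v A. split. apply cc_sym; auto. apply cc_lt; auto.
  - intros i Hi.
    destruct (Nat.eq_dec i (2*p)) as [->|Ne].
    + apply leftover_planar; auto.
    + pose proof (Nat.div_mod_eq i p) as D.
      assert (Hm : i / p < 2) by (apply Nat.Div0.div_lt_upper_bound; lia).
      assert (Hk : i mod p < p) by (apply Nat.mod_upper_bound; lia).
      replace i with ((i/p)*p + i mod p) by lia.
      apply main_planar; auto.
Qed.


Theorem lemma4p2 (p : nat) (hp : (1 <= p)%nat) :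
  planar_edge_partition (kron (Knnn_adj (4 * p)) K2_adj) (2 * p + 1) /\
  thickness_le (kron (Knnn_adj (4 * p)) K2_adj) (2 * p + 1).
Proof.
  pose proof (partition p hp) as P.
  split; [exact P|].
  destruct P as [c [H1 H2]].
  exists (fun i u v => kron (Knnn_adj (4 * p)) K2_adj u v /\ c u v = i).
  split; [|split].
  - intros i _ u v [A _]. exact A.
  - intros i Hi. apply H2; auto.
  - intros u v A. exists (c u v). split; [apply (H1 u v A)|]. split; auto.
Qed.
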